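(* Let $N\ge 0$ and let $a_0,\dots,a_N\in\mathbb C$ with $|a_k|<1$ for $0\le k\le N-1$ and $|a_N|=1$. Let $\Phi_0,\dots,\Phi_{N+1}$ be the monic polynomials generated by the Szegő recurrence from $a_0,\dots,a_N$, let $z_1,\dots,z_{N+1}$ be the (simple, unimodular) zeros of $\Phi_{N+1}$, and let $w_1,\dots,w_{N+1}>0$, $\sum_s w_s=1$, be the weights of the unique probability measure $\sum_s w_s\delta_{z_s}$ with respect to which $\sum_{s}\Phi_n(z_s)\overline{\Phi_m(z_s)}w_s=h_n\delta_{nm}$ for $0\le m,n\le N$, where $h_n=\prod_{k=0}^{n-1}(1-|a_k|^2)$. Define the mirror-dual parameters $\tilde a_n=-a_N\,\overline{a_{N-n-1}}$ for $n=0,1,\dots,N$, with the convention $a_{-1}=-1$ (so $\tilde a_N=a_N$), and let $\tilde\Phi_0,\dots,\tilde\Phi_{N+1}$ be the monic polynomials generated by the Szegő recurrence from $\tilde a_0,\dots,\tilde a_N$. Then: (i) $|\tilde a_k|<1$ for $k<N$, $|\tilde a_N|=1$, and $\tilde\Phi_{N+1}=\Phi_{N+1}$; in particular $\tilde\Phi_0,\dots,\tilde\Phi_N$ are orthogonal with respect to a probability measure $\sum_s\tilde w_s\delta_{z_s}$ ($\tilde w_s>0$, $\sum_s\tilde w_s=1$) supported on the same points $z_1,\dots,z_{N+1}$; (ii) the weights satisfy $$\tilde w_s\,w_s=\frac{h_N}{|\Phi_{N+1}'(z_s)|^2},\qquad s=1,\dots,N+1 .$$ Conversely, if two systems of para-orthogonal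 polynomials (each generated by Verblunsky parameters $b_0,\dots,b_N$, resp. $\tilde b_0,\dots,\tilde b_N$, with moduli $<1$ except the last one of modulus $1$) have final polynomials with the same zero set $\{z_1,\dots,z_{N+1}\}$, and their orthogonality weights satisfy $\tilde w_s w_s=c/|\Phi_{N+1}'(z_s)|^2$ for all $s$ and some constant $c>0$, then $\tilde b_n=-b_N\overline{b_{N-n-1}}$ for $n=0,\dots,N$ (with $b_{-1}=-1$).
   Context: Szegő recurrence: given complex numbers $a_0,a_1,\dots$, set $\Phi_0(z)=1$ and $\Phi_{n+1}(z)=z\Phi_n(z)-\overline{a_n}\,\Phi_n^*(z)$, where $\Phi_n^*(z)=z^n\,\overline{\Phi_n}(1/z)$ and $\overline{\Phi_n}$ denotes the polynomial whose coefficients are the complex conjugates of those of $\Phi_n$. The $a_n$ are called Verblunsky parameters. When $|a_k|<1$ for $k<N$ and $|a_N|=1$, $\Phi_{N+1}$ has $N+1$ simple zeros on the unit circle and $\Phi_0,\dots,\Phi_N$ are orthogonal with respect to a unique probability measure supported on these zeros; such a finite system is called a system of para-orthogonal polynomials on the unit circle (POPUC). *)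

(* Defs.v *)
From HB Require Import structures.
From mathcomp Require Import all_boot all_order all_algebra.
Set Implicit Arguments. Unset Strict Implicit. Unset Printing Implicit Defensive.
Import Order.TTheory GRing.Theory Num.Theory.
Local Open Scope ring_scope.

(* Complex numbers are modelled by an arbitrary numClosedFieldType C
   (e.g. algC, or R[i] for a real closed R); conjugation is x^*. *)

(* Phi_n^*(z) = z^n * conj(Phi_n)(1/z): coefficient of z^i is conj(p_{n-i}). *)
Definition pstar (C : numClosedFieldType) (n : nat) (p : {poly C}) : {poly C} :=
  \poly_(i < n.+1) (p`_(n - i))^*.

Fixpoint Phi (C : numClosedFieldType) (a : nat -> C) (n : nat) : {poly C} :=
  match n with
  | 0 => 1
  | n'.+1 => 'X * Phi a n' - ((a n')^*)%:P * pstar n' (Phi a n')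
  end.

Definition hnorm (C : numClosedFieldType) (a : nat -> C) (n : nat) : C :=
  \prod_(k < n) (1 - `|a k| ^+ 2).

Definition popuc_params (C : numClosedFieldType) (N : nat) (a : nat -> C) : Prop :=
  (forall k, (k < N)%N -> `|a k| < 1) /\ `|a N| = 1.

Definition simple_zeros (C : numClosedFieldType) (N : nat) (p : {poly C})
  (z : 'I_N.+1 -> C) : Prop :=
  injective z /\ p = \prod_(s < N.+1) ('X - (z s)%:P).

Definition orth_weights (C : numClosedFieldType) (N : nat) (a : nat -> C)
  (z : 'I_N.+1 -> C) (w : 'I_N.+1 -> C) : Prop :=
  (forall s, 0 < w s) /\ \sum_(s < N.+1) w s = 1 /\
  (forall n m, (n <= N)%N -> (m <= N)%N ->
     \sum_(s < N.+1) (Phi a n).[z s] * ((Phi a m).[z s])^* * w s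
       = (if n == m then hnorm a n else 0)).

Definition mirror (C : numClosedFieldType) (N : nat) (a : nat -> C) (n : nat) : C :=
  - a N * (if (n < N)%N then a (N - n.+1)%N else -1)^*.

Arguments popuc_params {C} N a.
Arguments simple_zeros {C} N p z.
Arguments orth_weights {C} N a z w.
Arguments mirror {C} N a n.

(* Main.v *)
Require Import Defs.
From HB Require Import structures.
From mathcomp Require Import all_boot all_order all_algebra.
From mathcomp Require Import ring lra zify.
Import Order.TTheory GRing.Theory Num.Theory.
Local Open Scope ring_scope.
Set Implicit Arguments. Unset Strict Implicit. Unset Printing Implicit Defensive.

Section Basic.
Variable C : numClosedFieldType.

Lemma coef_pstar n (p : {poly C}) i :
  (pstar n p)`_i = if (i < n.+1)%N then (p`_(n - i))^* else 0.
Proof. by rewrite coef_poly. Qed.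

Lemma pstarX n (p : {poly C}) : pstar n.+1 ('X * p) = pstar n p.
Proof.
apply/polyP => i; rewrite !coef_pstar coefXM.
case: (ltnP i n.+1) => hi.
  rewrite ltnS ltnW // subSn //.
rewrite ltnS leq_eqVlt; case: eqP => [->|] //=; first by rewrite subnn rmorph0.
by move=> ne; rewrite ltnNge hi.
Qed.

Lemma pstar_lin n (p q : {poly C}) c :
  pstar n (p - c%:P * q) = pstar n p - (c^* )%:P * pstar n q.
Proof.
apply/polyP => i; rewrite coefB coefCM !coef_pstar coefB coefCM.
by case: ifP => _; rewrite ?mulr0 ?subr0 // rmorphB rmorphM.
Qed.

Lemma pstarK n (p : {poly C}) : (size p <= n.+1)%N -> pstar n.+1 (pstar n p) = 'X * p.
Proof.
move=> sp; apply/polyP => i; rewrite coef_pstar coefXM coef_pstar.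
case: i => [|i] /=; first by rewrite subn0 ltnn rmorph0.
rewrite !ltnS subSS.
case: (leqP i n) => hi.
  by rewrite leq_subr subKn // conjCK.
by rewrite (leq_sizeP _ _ sp) // ltnW.
Qed.

Lemma pstar_rec n (p : {poly C}) c : (size p <= n.+1)%N ->
  pstar n.+1 ('X * p - c%:P * pstar n p) = pstar n p - (c^* )%:P * ('X * p).
Proof. by move=> sp; rewrite pstar_lin pstarX pstarK. Qed.
End Basic.

Section Phis.
Variable C : numClosedFieldType.
Variable a : nat -> C.

Definition Ps n := pstar n (Phi a n).
Definition g k n := \prod_(k <= j < n) (1 - `|a j| ^+ 2).

Lemma size_Phi n : (size (Phi a n) <= n.+1)%N.
Proof.
elim: n => [|n IH] /=; first by rewrite size_poly1.
rewrite (leq_trans (size_polyD _ _)) // geq_max size_polyN.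
rewrite (leq_trans (size_mul_leq _ _)) ?size_polyX //=.
rewrite (leq_trans (size_mul_leq _ _)) //.
have h1 := size_polyC_leq1 ((a n)^*); have h2 := size_poly n.+1 (fun i => ((Phi a n)`_(n - i))^*).
rewrite /pstar; lia.
Qed.

Lemma coef_Phi_top n : (Phi a n)`_n = 1.
Proof.
elim: n => [|n IH] /=; first by rewrite coefC.
rewrite coefB coefXM IH coefCM coef_pstar ltnn mulr0 subr0 //.
Qed.

Lemma Phi_rec n : Phi a n.+1 = 'X * Phi a n - ((a n)^* )%:P * Ps n.
Proof. by []. Qed.

Lemma Ps_rec n : Ps n.+1 = Ps n - (a n)%:P * ('X * Phi a n).
Proof. by rewrite /Ps Phi_rec /Ps pstar_rec ?size_Phi // conjCK. Qed.

Lemma Phi_ev n x : (Phi a n.+1).[x] = x * (Phi a n).[x] - (a n)^* * (Ps n).[x].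
Proof. by rewrite Phi_rec !hornerE mulrC. Qed.

Lemma Ps_ev n x : (Ps n.+1).[x] = (Ps n).[x] - a n * x * (Phi a n).[x].
Proof. by rewrite Ps_rec !hornerE. Qed.

Lemma Ps0 n : (Ps n)`_0 = 1.
Proof. by rewrite /Ps coef_pstar /= subn0 coef_Phi_top rmorph1. Qed.

Lemma Phi_coef0 n : (Phi a n.+1)`_0 = - (a n)^*.
Proof. by rewrite Phi_rec coefB coefXM /= coefCM Ps0 mulr1 sub0r. Qed.

Lemma g_recr k n : (k <= n)%N -> g k n.+1 = g k n * (1 - `|a n| ^+ 2).
Proof. by move=> kn; rewrite /g big_nat_recr. Qed.

Lemma gnn n : g n n = 1.
Proof. by rewrite /g big_geq. Qed.

Lemma Ps_0 : Ps 0 = 1.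
Proof. apply/polyP => i; rewrite coef_pstar coefC; case: i => [|i] /=; by rewrite ?coefC ?rmorph1. Qed.

Lemma CD n x y :
  (Ps n).[x] * ((Ps n).[y])^* - x * y^* * (Phi a n).[x] * ((Phi a n).[y])^*
  = (1 - x * y^* ) * \sum_(k < n.+1) (Phi a k).[x] * ((Phi a k).[y])^* * g k n.
Proof.
elim: n => [|n IH].
  by rewrite big_ord1 Ps_0 /= !hornerC gnn !rmorph1 !mulr1.
rewrite big_ord_recr /= gnn mulr1.
rewrite (eq_bigr (fun k : 'I_n.+1 => (Phi a k).[x] * ((Phi a k).[y])^* * g k n * (1 - `|a n| ^+ 2))); last first.
  by move=> k _; rewrite g_recr ?mulrA // -ltnS.
rewrite -mulr_suml mulrDr mulrA (mulrC _ (1 - _)) -mulrA -IH.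
rewrite !Phi_ev !Ps_ev normCK !rmorphB !rmorphM /= !conjCK.
ring.
Qed.
End Phis.

Section Nodes.
Variable C : numClosedFieldType.
Variable N : nat.
Variable a : nat -> C.
Variable z : 'I_N.+1 -> C.
Hypothesis pa : popuc_params N a.
Hypothesis sz : simple_zeros N (Phi a N.+1) z.

Lemma aN1 : a N * (a N)^* = 1.
Proof. by rewrite -normCK (proj2 pa) expr1n. Qed.

Lemma g_gt0 k : 0 < g a k N.
Proof.
rewrite /g big_nat_cond; apply: prodr_gt0 => j /andP[/andP[_ jN] _]; rewrite subr_gt0.
by rewrite exprn_ilt1 ?normr_ge0 ?(proj1 pa).
Qed.

Lemma P_node s : (Phi a N.+1).[z s] = 0.
Proof.
rewrite (proj2 sz) horner_prod (bigD1 s) //= hornerXsubC subrr mul0r //.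
Qed.

Lemma Ps_node s : (Ps a N).[z s] = a N * z s * (Phi a N).[z s].
Proof.
have := P_node s; rewrite Phi_ev => /eqP; rewrite subr_eq0 => /eqP h.
by rewrite -mulrA h mulrA aN1 mul1r.
Qed.

Definition kern s t := \sum_(k < N.+1) (Phi a k).[z s] * ((Phi a k).[z t])^* * g a k N.

Lemma kern_eq s t : (1 - z s * (z t)^* ) * kern s t = 0.
Proof.
rewrite /kern -CD !Ps_node !rmorphM /=.
have := aN1; move=> h.
transitivity ((a N * (a N)^* - 1) * (z s * (z t)^* * (Phi a N).[z s] * ((Phi a N).[z t])^* )); first ring.
by rewrite h subrr mul0r.
Qed.

Lemma kern_gt0 s : 0 < kern s s.
Proof.
rewrite /kern big_ord_recl /= hornerC rmorph1 !mul1r.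
apply: ltr_wpDr; last exact: g_gt0.
apply: sumr_ge0 => k _; apply: mulr_ge0; first exact: mul_conjC_ge0.
exact: ltW (g_gt0 _).
Qed.

Lemma z_unit s : z s * (z s)^* = 1.
Proof.
have := kern_eq s s => /eqP; rewrite mulf_eq0 (gt_eqF (kern_gt0 s)) orbF subr_eq0.
by move/eqP.
Qed.

Lemma kern_off s t : s != t -> kern s t = 0.
Proof.
move=> st; have := kern_eq s t => /eqP; rewrite mulf_eq0 => /orP[|/eqP //].
rewrite subr_eq0 => /eqP h.
have : z t = z s by rewrite -[z t]mul1r h -mulrA (mulrC _ (z t)) z_unit mulr1.
by move/(proj1 sz) => ts; rewrite ts eqxx in st.
Qed.
End Nodes.

Lemma poly_ext (C : numClosedFieldType) (p q : {poly C}) :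
  (forall x, p.[x] = q.[x]) -> p = q.
Proof.
move=> h; apply/eqP; rewrite -subr_eq0; apply/negPn/negP => nz.
have r1 : all (root (p - q)) [seq i%:R | i <- iota 0 (size (p - q))].
  by apply/allP => x /mapP[i _ ->]; rewrite /root hornerD hornerN h subrr.
have r2 : uniq [seq i%:R : C | i <- iota 0 (size (p - q))].
  by rewrite map_inj_uniq ?iota_uniq // => i j /eqP; rewrite eqr_nat => /eqP.
by have := max_poly_roots nz r1 r2; rewrite size_map size_iota ltnn.
Qed.

Section Deriv.
Variable C : numClosedFieldType.
Variable N : nat.
Variable a : nat -> C.
Variable z : 'I_N.+1 -> C.
Hypothesis pa : popuc_params N a.
Hypothesis sz : simple_zeros N (Phi a N.+1) z.

Definition kp s : {poly C} :=
  \sum_(k < N.+1) Phi a k * (((Phi a k).[z s])^* * g a k N)%:P.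

Lemma kp_ev s x : (kp s).[x] = \sum_(k < N.+1) (Phi a k).[x] * ((Phi a k).[z s])^* * g a k N.
Proof. by rewrite /kp horner_sum; apply: eq_bigr => k _; rewrite hornerM hornerC mulrA. Qed.

Lemma kp_id s : (1 - ((z s)^* )%:P * 'X) * kp s
  = (- (z s)^* * ((Phi a N).[z s])^* )%:P * Phi a N.+1.
Proof.
apply: poly_ext => x.
have e : (1 - ((z s)^* )%:P * 'X).[x] = 1 - x * (z s)^* by rewrite !hornerE mulrC.
rewrite hornerM kp_ev e -CD hornerM hornerC Phi_ev (Ps_node pa sz) !rmorphM /=.
ring.
Qed.

Lemma kappa_deriv s : kern a z s s = ((Phi a N).[z s])^* * ((Phi a N.+1)^`()).[z s].
Proof.
have := congr1 (fun p => (p^`()).[z s]) (kp_id s).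
rewrite /= derivM deriv_mulC derivB derivC deriv_mulC derivX sub0r mulr1.
rewrite hornerD !hornerM !hornerN !hornerC kp_ev -/(kern a z s s) !hornerE.
have zu := z_unit pa sz s.
have -> : 1 - (z s)^* * z s = 0 by rewrite mulrC zu subrr.
rewrite mul0r addr0 => h.
have nz : (z s)^* != 0 by apply/eqP => e; move: zu; rewrite e mulr0 => /eqP; rewrite eq_sym oner_eq0.
have nz' : - (z s)^* != 0 by rewrite oppr_eq0.
by apply: (mulfI nz'); rewrite h mulrA.
Qed.
End Deriv.

Section Weights.
Variable C : numClosedFieldType.
Variable N : nat.
Variable a : nat -> C.
Variable z : 'I_N.+1 -> C.
Hypothesis pa : popuc_params N a.
Hypothesis sz : simple_zeros N (Phi a N.+1) z.

Lemma g0N : g a 0 N = hnorm a N.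
Proof. by rewrite /g /hnorm big_mkord. Qed.

Lemma g_split n : (n <= N)%N -> hnorm a n * g a n N = hnorm a N.
Proof. by move=> nN; rewrite -g0N /g /hnorm (@big_cat_nat _ _ _ n 0 N _ _ (leq0n n) nN) /= big_mkord. Qed.

Lemma hN_gt0 : 0 < hnorm a N.
Proof. by rewrite -g0N; apply: g_gt0. Qed.

Definition wgt s := hnorm a N / kern a z s s.

Lemma Phi0_ev x : (Phi a 0).[x] = 1.
Proof. by rewrite /= hornerC. Qed.

Lemma weights_unique w : orth_weights N a z w -> forall t, w t = wgt t.
Proof.
move=> [wpos [wsum worth]] t.
have e1 : \sum_(s < N.+1) w s * kern a z s t = w t * kern a z t t.
  rewrite (bigD1 t) //= big1 ?addr0 // => s st.
  by rewrite (kern_off pa sz st) mulr0.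
have e2 : \sum_(s < N.+1) w s * kern a z s t = hnorm a N.
  rewrite /kern.
  under eq_bigr do rewrite mulr_sumr.
  rewrite exchange_big (bigD1 ord0) //= [X in _ + X]big1 ?addr0.
    have := worth 0%N 0%N (leq0n _) (leq0n _).
    rewrite eqxx /hnorm big_ord0 => h.
    transitivity ((\sum_(s < N.+1) (Phi a 0).[z s] * ((Phi a 0).[z s])^* * w s) * g a 0 N).
      rewrite mulr_suml; apply: eq_bigr => s _; rewrite !Phi0_ev rmorph1; ring.
    by rewrite h mul1r g0N.
  move=> k k0.
  have := worth k 0%N (ltn_ord k) (leq0n _).
  have -> : (k == 0%N :> nat) = false by apply/negbTE.
  move=> h.
  transitivity ((\sum_(s < N.+1) (Phi a k).[z s] * ((Phi a 0).[z s])^* * w s) * (((Phi a k).[z t])^* * g a k N)).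
    rewrite mulr_suml; apply: eq_bigr => s _; rewrite Phi0_ev rmorph1; ring.
  by rewrite h mul0r.
rewrite /wgt -e2 e1 mulfK //.
by rewrite (gt_eqF (kern_gt0 z pa t)).
Qed.

Lemma weights_orth n m : (n <= N)%N -> (m <= N)%N ->
  \sum_(s < N.+1) (Phi a n).[z s] * ((Phi a m).[z s])^* * wgt s
    = (if n == m then hnorm a n else 0).
Proof.
move=> nN mN.
pose A : 'M[C]_N.+1 := \matrix_(k, s) (Phi a k).[z s].
pose B : 'M[C]_N.+1 := \matrix_(s, k) (((Phi a k).[z s])^* * g a k N / kern a z s s).
have BA : B *m A = 1%:M.
  apply/matrixP => s t; rewrite !mxE.
  transitivity (kern a z t s / kern a z s s).
    rewrite /kern mulr_suml; apply: eq_bigr => k _; rewrite !mxE; ring.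
  have ks : kern a z s s != 0 by rewrite (gt_eqF (kern_gt0 z pa s)).
  case: (eqVneq s t) => [->|st]; first by rewrite divff // (gt_eqF (kern_gt0 z pa t)).
  by rewrite kern_off // ?mul0r // eq_sym.
have AB := mulmx1C BA.
have := congr1 (fun M : 'M[C]_N.+1 => M (Ordinal (nN : (n < N.+1)%N)) (Ordinal (mN : (m < N.+1)%N))) AB.
rewrite /= !mxE /= => h.
have gm : g a m N != 0 by rewrite (gt_eqF (g_gt0 pa m)).
transitivity (hnorm a N / g a m N * \sum_j A (Ordinal (nN : (n < N.+1)%N)) j * B j (Ordinal (mN : (m < N.+1)%N))).
  rewrite mulr_sumr; apply: eq_bigr => s _; rewrite !mxE /= /wgt.
  by field; rewrite gm (gt_eqF (kern_gt0 z pa s)).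
rewrite h.
have -> : (Ordinal (nN : (n < N.+1)%N) == Ordinal (mN : (m < N.+1)%N)) = (n == m) by [].
case: (eqVneq n m) => [<-|nm]; last by rewrite mulr0.
rewrite mulr1 -(g_split nN) mulfK //.
by rewrite (gt_eqF (g_gt0 pa n)).
Qed.

Lemma weights_exist : orth_weights N a z wgt.
Proof.
split; first by move=> s; rewrite divr_gt0 ?hN_gt0 ?(kern_gt0 z pa s).
split; last exact: weights_orth.
have := weights_orth (leq0n N) (leq0n N).
rewrite eqxx /hnorm big_ord0 => <-.
by apply: eq_bigr => s _; rewrite Phi0_ev rmorph1 !mul1r.
Qed.
End Weights.

Section Transfer.
Variable C : numClosedFieldType.
Notation P := {poly C}.

Record m2 := M2 { e11 : P; e12 : P; e21 : P; e22 : P }.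

Definition mmul (m n : m2) := M2 (e11 m * e11 n + e12 m * e21 n) (e11 m * e12 n + e12 m * e22 n)
                               (e21 m * e11 n + e22 m * e21 n) (e21 m * e12 n + e22 m * e22 n).
Definition mid := M2 1 0 0 1.
Definition mtr (m : m2) := M2 (e11 m) (e21 m) (e12 m) (e22 m).
Definition mdet (m : m2) := e11 m * e22 m - e12 m * e21 m.

Lemma mmulA m n p : mmul m (mmul n p) = mmul (mmul m n) p.
Proof. by case: m n p => [? ? ? ?] [? ? ? ?] [? ? ? ?]; rewrite /mmul /=; congr M2; ring. Qed.
Lemma mmul1 m : mmul m mid = m.
Proof. by case: m => ? ? ? ?; rewrite /mmul /=; congr M2; ring. Qed.
Lemma mmul1l m : mmul mid m = m.
Proof. by case: m => ? ? ? ?; rewrite /mmul /=; congr M2; ring. Qed.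
Lemma mtr_mul m n : mtr (mmul m n) = mmul (mtr n) (mtr m).
Proof. by case: m n => [? ? ? ?] [? ? ? ?]; rewrite /mmul /mtr /=; congr M2; ring. Qed.
Lemma mdet_mul m n : mdet (mmul m n) = mdet m * mdet n.
Proof. by case: m n => [? ? ? ?] [? ? ? ?]; rewrite /mmul /mdet /=; ring. Qed.

Definition Amat (c : C) := M2 'X (- (c^* )%:P) (- (c%:P * 'X)) 1.

Fixpoint Wm (c : nat -> C) n := match n with 0 => mid | n'.+1 => mmul (Amat (c n')) (Wm c n') end.

Lemma W_vec c n : e11 (Wm c n) + e12 (Wm c n) = Phi c n /\ e21 (Wm c n) + e22 (Wm c n) = Ps c n.
Proof.
elim: n => [|n [IH1 IH2]]; first by rewrite /= Ps_0 addr0 add0r.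
rewrite Phi_rec Ps_rec -IH1 -IH2 /mmul /=.
by split; ring.
Qed.

Lemma W_ext c c' n : (forall j, (j < n)%N -> c j = c' j) -> Wm c n = Wm c' n.
Proof.
elim: n => [//|n IH] h /=.
by rewrite h // IH // => j jn; apply: h; apply: ltnW.
Qed.

Lemma W_recl c n : Wm c n.+1 = mmul (Wm (fun j => c j.+1) n) (Amat (c 0%N)).
Proof.
elim: n c => [|n IH] c.
  by rewrite (_ : Wm c 1 = mmul (Amat (c 0%N)) mid) // (_ : Wm _ 0 = mid) // mmul1 mmul1l.
rewrite (_ : Wm c n.+2 = mmul (Amat (c n.+1)) (Wm c n.+1)) // IH mmulA //.
Qed.

Definition Emat := M2 1 0 0 'X.

Lemma A_tr c : mmul Emat (mtr (Amat c)) = mmul (Amat (c^* )) Emat.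
Proof. by rewrite /mmul /= conjCK; congr M2; ring. Qed.

Lemma W_tr c n : mmul Emat (mtr (Wm c n)) = mmul (Wm (fun j => (c (n.-1 - j)%N)^* ) n) Emat.
Proof.
elim: n => [|n IH]; first by rewrite /= mmul1 mmul1l /mtr /mid /Emat.
rewrite [Wm c _]/= mtr_mul mmulA IH -mmulA A_tr mmulA W_recl subn0 /=.
congr (mmul (mmul _ _) _); apply: W_ext => j jn.
by congr (_^* ); congr c; lia.
Qed.

Definition Rmat (mu : C) := M2 mu%:P 0 0 1.

Lemma W_rot mu c n : mu * mu^* = 1 ->
  mmul (Rmat mu) (Wm (fun j => mu * c j) n) = mmul (Wm c n) (Rmat mu).
Proof.
move=> hmu; elim: n => [|n IH]; first by rewrite /= mmul1 mmul1l.
rewrite [Wm _ n.+1]/= [Wm c n.+1]/= mmulA.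
have -> : mmul (Rmat mu) (Amat (mu * c n)) = mmul (Amat (c n)) (Rmat mu).
  have e2 : ((mu * c n)^* )%:P = (mu^* )%:P * ((c n)^* )%:P by rewrite rmorphM polyCM.
  rewrite /mmul /Rmat /Amat /= e2 !polyCM.
  have e : mu%:P * (mu^* )%:P = 1 by rewrite -polyCM hmu.
  congr M2; try ring.
  transitivity (- ((mu%:P * (mu^* )%:P) * ((c n)^* )%:P)); first ring.
  by rewrite e mul1r; ring.
by rewrite -mmulA IH mmulA.
Qed.

Lemma A_det c : mdet (Amat c) = (1 - `|c| ^+ 2)%:P * 'X.
Proof. by rewrite /mdet /Amat /= normCK polyCB polyCM; ring. Qed.

Lemma W_det c n : mdet (Wm c n) = (hnorm c n)%:P * 'X ^+ n.
Proof.
elim: n => [|n IH]; first by rewrite /mdet /mid /hnorm big_ord0 /= polyC1 expr0 !mulr1 mulr0 subr0.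
rewrite [Wm c _]/= mdet_mul IH A_det /hnorm big_ord_recr /= polyCM (exprS ('X : {poly C}) n); ring.
Qed.
End Transfer.

Section Mirror.
Variable C : numClosedFieldType.
Variable N : nat.
Variable a : nat -> C.
Hypothesis pa : popuc_params N a.

Lemma mirror_N : mirror N a N = a N.
Proof. by rewrite /mirror ltnn rmorphN rmorph1 mulrNN mulr1. Qed.

Lemma mirror_lt j : (j < N)%N -> mirror N a j = (- a N) * (a (N.-1 - j)%N)^*.
Proof. by move=> jN; rewrite /mirror jN; congr (_ * (a _)^* ); lia. Qed.

Lemma norm_aN : `|a N| = 1.
Proof. exact: (proj2 pa). Qed.

Lemma mirror_norm j : (j < N)%N -> `|mirror N a j| = `|a (N.-1 - j)%N|.
Proof. by move=> jN; rewrite mirror_lt // normrM normrN norm_aN mul1r norm_conjC. Qed.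

Lemma mirror_popuc : popuc_params N (mirror N a).
Proof.
split; last by rewrite mirror_N norm_aN.
move=> k kN; rewrite mirror_norm //; apply: (proj1 pa); lia.
Qed.

Lemma mirror_hnorm : hnorm (mirror N a) N = hnorm a N.
Proof.
rewrite /hnorm (reindex_inj rev_ord_inj) /=; apply: eq_bigr => k _.
have kN := ltn_ord k; rewrite mirror_norm /=; last by lia.
by congr (1 - `|a _| ^+ 2); lia.
Qed.

Lemma RE mu : mmul (Rmat mu) (Emat C) = mmul (Emat C) (Rmat mu).
Proof. by rewrite /mmul /=; congr M2; ring. Qed.

Lemma aN1' : a N * (a N)^* = 1.
Proof. by rewrite -normCK norm_aN expr1n. Qed.

Lemma entries : exists w11 w12 w21 w22 t11 t12 t21 t22 : {poly C},
  [/\ w11 + w12 = Phi a N, w21 + w22 = Ps a N, t11 + t12 = Phi (mirror N a) N,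
      t21 + t22 = Ps (mirror N a) N &
    [/\ mmul (mmul (Rmat (- a N)) (M2 t11 t12 t21 t22)) (Emat C)
        = mmul (mmul (Emat C) (mtr (M2 w11 w12 w21 w22))) (Rmat (- a N)),
      w11 * w22 - w12 * w21 = (hnorm a N)%:P * 'X ^+ N &
      t11 * t22 - t12 * t21 = (hnorm (mirror N a) N)%:P * 'X ^+ N]].
Proof.
have [v1 v2] := W_vec a N; have [u1 u2] := W_vec (mirror N a) N.
have d1 := W_det a N; have d2 := W_det (mirror N a) N.
have eT : Wm (mirror N a) N = Wm (fun j => (- a N) * (a (N.-1 - j)%N)^* ) N.
  by apply: W_ext => j jN; rewrite mirror_lt.
have rot := W_rot (fun j => (a (N.-1 - j)%N)^* ) N (_ : (- a N) * (- a N)^* = 1).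
have tr := W_tr a N.
have K : mmul (mmul (Rmat (- a N)) (Wm (mirror N a) N)) (Emat C)
       = mmul (mmul (Emat C) (mtr (Wm a N))) (Rmat (- a N)).
  rewrite eT rot; last by rewrite rmorphN mulrNN aN1'.
  by rewrite -mmulA RE mmulA tr.
move: v1 v2 u1 u2 d1 d2 K; case: (Wm a N) => w11 w12 w21 w22; case: (Wm (mirror N a) N) => t11 t12 t21 t22.
move=> v1 v2 u1 u2 d1 d2 K.
by exists w11, w12, w21, w22, t11, t12, t21, t22.
Qed.

Lemma Phi_mirror : Phi (mirror N a) N.+1 = Phi a N.+1.
Proof.
have [w11 [w12 [w21 [w22 [t11 [t12 [t21 [t22 [v1 v2 u1 u2 [K d1 d2]]]]]]]]]] := entries.
move: K; rewrite /mmul /Rmat /Emat /mtr /= => -[k1 k2 k3 k4].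
rewrite !(mul0r, mulr0, addr0, add0r, mulr1, mul1r) in k1 k2 k3 k4.
rewrite -/(Ps _ N) -/(Ps _ N) -u1 -u2 -v1 -v2 mirror_N.
have aN0 : a N != 0 by apply/eqP => e; have := aN1'; rewrite e mul0r => /eqP; rewrite eq_sym oner_eq0.
have Xn0 : ('X : {poly C}) != 0 by rewrite polyX_eq0.
have hA : (- a N)%:P != 0 :> {poly C} by rewrite polyC_eq0 oppr_eq0.
have e11 : t11 = w11 by apply: (mulfI hA); rewrite k1 mulrC.
have e22 : t22 = w22 by apply: (mulfI Xn0); rewrite mulrC k4.
have eA : ((a N)^* )%:P * (a N)%:P = 1 :> {poly C} by rewrite -polyCM mulrC aN1'.
have t12X : 'X * t12 = - (((a N)^* )%:P * w21).
  rewrite -k2 polyCN.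
  transitivity ((((a N)^* )%:P * (a N)%:P) * ('X * t12)); first by rewrite eA mul1r.
  ring.
rewrite e11 e22 k3 polyCN.
apply: (mulfI Xn0).
transitivity ('X * 'X * w11 + 'X * ('X * t12) + (((a N)^* )%:P * (a N)%:P) * ('X * 'X * w12)
   - 'X * (((a N)^* )%:P * w22)); first ring.
rewrite t12X eA; ring.
Qed.

Lemma node_mirror x : (Phi a N.+1).[x] = 0 ->
  x * (Phi a N).[x] * (Phi (mirror N a) N).[x] = (a N)^* * x ^+ N * hnorm a N.
Proof.
move=> Px.
have [w11 [w12 [w21 [w22 [t11 [t12 [t21 [t22 [v1 v2 u1 u2 [K d1 d2]]]]]]]]]] := entries.
move: K; rewrite /mmul /Rmat /Emat /mtr /= => -[k1 k2 k3 k4].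
rewrite !(mul0r, mulr0, addr0, add0r, mulr1, mul1r) in k1 k2 k3 k4.
have aN0 : a N != 0 by apply/eqP => e; have := aN1'; rewrite e mul0r => /eqP; rewrite eq_sym oner_eq0.
have hA : (- a N)%:P != 0 :> {poly C} by rewrite polyC_eq0 oppr_eq0.
have e11 : t11 = w11 by apply: (mulfI hA); rewrite k1 mulrC.
have hPs : (Ps a N).[x] = a N * x * (Phi a N).[x].
  move: Px; rewrite Phi_ev => /eqP; rewrite subr_eq0 => /eqP h.
  by rewrite -mulrA h mulrA aN1' mul1r.
have ev2 := congr1 (fun p => p.[x]) k2; rewrite /= !hornerE in ev2.
have evd := congr1 (fun p => p.[x]) d1; rewrite /= !hornerE in evd.
rewrite -u1 -v1 e11 !hornerE.
rewrite -v1 -v2 !hornerE in hPs.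
have ew22 : w22.[x] = a N * x * (w11.[x] + w12.[x]) - w21.[x] by rewrite -hPs; ring.
have -> : (a N)^* * x ^+ N * hnorm a N = (a N)^* * (w11.[x] * w22.[x] - w12.[x] * w21.[x]).
  by rewrite evd; ring.
rewrite ew22 -ev2.
transitivity ((a N * (a N)^* ) * (x * (w11.[x] + w12.[x]) * (w11.[x] + t12.[x]))).
  by rewrite aN1' mul1r.
ring.
Qed.
End Mirror.

Section Product.
Variable C : numClosedFieldType.
Variable N : nat.
Variable a : nat -> C.
Variable z : 'I_N.+1 -> C.
Hypothesis pa : popuc_params N a.
Hypothesis sz : simple_zeros N (Phi a N.+1) z.

Lemma sz_mirror : simple_zeros N (Phi (mirror N a) N.+1) z.
Proof. by rewrite Phi_mirror. Qed.

Lemma norm_z s : `|z s| = 1.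
Proof.
have h : `|z s| ^+ 2 = 1 by rewrite normCK; exact: (z_unit pa sz s).
by move/eqP: h; rewrite sqrp_eq1 ?normr_ge0 // => /eqP.
Qed.

Lemma kk s : kern a z s s * kern (mirror N a) z s s
  = hnorm a N * `|((Phi a N.+1)^`()).[z s]| ^+ 2.
Proof.
have k1 := kern_gt0 z pa s.
have k2 := kern_gt0 z (mirror_popuc pa) s.
have pos : 0 <= kern a z s s * kern (mirror N a) z s s by rewrite mulr_ge0 ?ltW.
rewrite -(ger0_norm pos).
rewrite (kappa_deriv pa sz) (kappa_deriv (mirror_popuc pa) sz_mirror) (Phi_mirror pa).
have nm := node_mirror pa (P_node sz s).
have e : `|(Phi a N).[z s]| * `|(Phi (mirror N a) N).[z s]| = hnorm a N.
  have := congr1 (fun x => `|x|) nm; rewrite /= !normrM norm_z mul1r norm_conjC (proj2 pa) mul1r.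
  by rewrite normrX norm_z expr1n mul1r (ger0_norm (ltW (hN_gt0 pa))).
rewrite !normrM !norm_conjC -e; ring.
Qed.

Lemma product_formula wt : orth_weights N (mirror N a) z wt ->
  forall w, orth_weights N a z w ->
  forall s, wt s * w s = hnorm a N / `|((Phi a N.+1)^`()).[z s]| ^+ 2.
Proof.
move=> owt w ow s.
rewrite (weights_unique pa sz ow) (weights_unique (mirror_popuc pa) sz_mirror owt) /wgt.
rewrite mirror_hnorm //.
have k1 := kern_gt0 z pa s.
have k2 := kern_gt0 z (mirror_popuc pa) s.
have hk := kk s.
have h0 := hN_gt0 pa.
have pn : `|((Phi a N.+1)^`()).[z s]| ^+ 2 != 0.
  apply/eqP => e; move: hk; rewrite e mulr0 => /eqP; rewrite mulf_eq0 !gt_eqF //.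
have pe : `|((Phi a N.+1)^`()).[z s]| ^+ 2 = kern a z s s * kern (mirror N a) z s s / hnorm a N.
  by rewrite hk; field; rewrite gt_eqF.
rewrite pe; field.
by rewrite !gt_eqF.
Qed.
End Product.

Section Same.
Variable C : numClosedFieldType.
Variable N : nat.
Variable z : 'I_N.+1 -> C.
Variable w : 'I_N.+1 -> C.

Lemma ortho_low a : orth_weights N a z w -> forall k, (k <= N)%N ->
  forall j (q : {poly C}), (size q <= j)%N -> (j <= k)%N ->
  \sum_(s < N.+1) (Phi a k).[z s] * (q.[z s])^* * w s = 0.
Proof.
move=> [_ [_ ow]] k kN; elim=> [|j IH] q sq jk.
  move: sq; rewrite leqn0 size_poly_eq0 => /eqP ->.
  by apply: big1 => s _; rewrite horner0 rmorph0 mulr0 mul0r.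
pose r := q - (q`_j)%:P * Phi a j.
have sr : (size r <= j)%N.
  apply/leq_sizeP => i ji; rewrite /r coefB coefCM.
  have sPj := size_Phi a j.
  case: (eqVneq i j) => [->|ij]; first by rewrite coef_Phi_top mulr1 subrr.
  have ji' : (j < i)%N by rewrite ltn_neqAle eq_sym ij.
  move/leq_sizeP: (sq) => sq'; move/leq_sizeP: sPj => sPj'.
  by rewrite (sq' i ji') (sPj' i ji') mulr0 subrr.
have eq : q = r + (q`_j)%:P * Phi a j by rewrite /r subrK.
have jk' : (j < k)%N by [].
rewrite eq.
transitivity (\sum_(s < N.+1) (Phi a k).[z s] * (r.[z s])^* * w s
  + ((q`_j)^* ) * \sum_(s < N.+1) (Phi a k).[z s] * ((Phi a j).[z s])^* * w s).
  rewrite mulr_sumr -big_split /=; apply: eq_bigr => s _.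
  rewrite hornerD hornerM hornerC rmorphD rmorphM /=; ring.
rewrite IH ?(ltnW jk') // ow // ?(leq_trans (ltnW jk') kN) //.
by rewrite (gtn_eqF jk') mulr0 addr0.
Qed.

Lemma same_Phi a1 a2 : injective z -> orth_weights N a1 z w -> orth_weights N a2 z w ->
  forall k, (k <= N)%N -> Phi a1 k = Phi a2 k.
Proof.
move=> zi ow1 ow2 k kN.
have wpos := proj1 ow1.
pose D := Phi a1 k - Phi a2 k.
have sD : (size D <= k)%N.
  apply/leq_sizeP => i ki; rewrite /D coefB.
  case: (eqVneq i k) => [->|ik]; first by rewrite !coef_Phi_top subrr.
  have ki' : (k < i)%N by rewrite ltn_neqAle eq_sym ik.
  move/leq_sizeP: (size_Phi a1 k) => h1; move/leq_sizeP: (size_Phi a2 k) => h2.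
  by rewrite (h1 i ki') (h2 i ki') subrr.
have S0 : \sum_(s < N.+1) D.[z s] * (D.[z s])^* * w s = 0.
  transitivity (\sum_(s < N.+1) (Phi a1 k).[z s] * (D.[z s])^* * w s
              - \sum_(s < N.+1) (Phi a2 k).[z s] * (D.[z s])^* * w s).
    rewrite -sumrB; apply: eq_bigr => s _; rewrite {1}/D hornerD hornerN; ring.
  by rewrite (ortho_low ow1 kN sD) // (ortho_low ow2 kN sD) // subrr.
have Dz : forall s, D.[z s] = 0.
  move=> s.
  have ge : forall t, 0 <= D.[z t] * (D.[z t])^* * w t.
    by move=> t; rewrite mulr_ge0 ?mul_conjC_ge0 ?ltW.
  have := psumr_eq0P (fun t _ => ge t) S0 (i:=s) isT => /eqP.
  rewrite mulf_eq0 (gt_eqF (wpos s)) orbF mulf_eq0 => /orP[/eqP //|].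
  by rewrite conjC_eq0 => /eqP.
apply/eqP; rewrite -subr_eq0 -/D; apply/eqP.
apply/eqP; apply: contraT => nz.
have r1 : all (root D) [seq z s | s <- enum 'I_N.+1].
  by apply/allP => x /mapP[s _ ->]; rewrite /root Dz.
have r2 : uniq [seq z s | s <- enum 'I_N.+1] by rewrite map_inj_uniq ?enum_uniq.
have := max_poly_roots nz r1 r2; rewrite size_map size_enum_ord => h.
have := leq_trans h sD; rewrite ltnNge.
by rewrite (leq_trans kN).
Qed.

Lemma same_params a1 a2 :
  simple_zeros N (Phi a1 N.+1) z -> simple_zeros N (Phi a2 N.+1) z ->
  orth_weights N a1 z w -> orth_weights N a2 z w ->
  forall n, (n <= N)%N -> a1 n = a2 n.
Proof.
move=> sz1 sz2 ow1 ow2 n nN.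
have e : Phi a1 n.+1 = Phi a2 n.+1.
  case: (ltnP n N) => nN'.
    exact: (same_Phi (proj1 sz1) ow1 ow2 nN').
  have -> : n = N by apply/eqP; rewrite eqn_leq nN nN'.
  by rewrite (proj2 sz1) (proj2 sz2).
have := congr1 (fun p : {poly C} => p`_0) e; rewrite /= !Phi_coef0 => /oppr_inj.
exact: (can_inj (@conjCK _)).
Qed.
End Same.

Unset Implicit Arguments.

Lemma orth_weights_ext (C : numClosedFieldType) N (a : nat -> C) z (w w' : 'I_N.+1 -> C) :
  (forall s, w s = w' s) -> orth_weights N a z w -> orth_weights N a z w'.
Proof.
move=> e [p [s o]]; split; first by move=> t; rewrite -e.
split; first by rewrite -s; apply: eq_bigr => t _; rewrite e.
by move=> n m nN mN; rewrite -o //; apply: eq_bigr => t _; rewrite e.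
Qed.

Theorem proposition2 (C : numClosedFieldType) (N : nat) :
  (forall (a : nat -> C) (z : 'I_N.+1 -> C) (w : 'I_N.+1 -> C),
     popuc_params N a ->
     simple_zeros N (Phi a N.+1) z ->
     orth_weights N a z w ->
     [/\ popuc_params N (mirror N a),
         Phi (mirror N a) N.+1 = Phi a N.+1,
         exists wt : 'I_N.+1 -> C, orth_weights N (mirror N a) z wt
       & forall wt : 'I_N.+1 -> C, orth_weights N (mirror N a) z wt ->
           forall s, wt s * w s
             = hnorm a N / `|((Phi a N.+1)^`()).[z s]| ^+ 2]) /\
  (forall (b bt : nat -> C) (z : 'I_N.+1 -> C) (w wt : 'I_N.+1 -> C) (c : C),
     popuc_params N b -> popuc_params N bt ->
     simple_zeros N (Phi b N.+1) z -> simple_zeros N (Phi bt N.+1) z ->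
     orth_weights N b z w -> orth_weights N bt z wt ->
     0 < c ->
     (forall s, wt s * w s = c / `|((Phi b N.+1)^`()).[z s]| ^+ 2) ->
     forall n, (n <= N)%N -> bt n = mirror N b n).
Proof.
split.
  move=> a z w pa sz ow; split.
  - exact: mirror_popuc pa.
  - exact: Phi_mirror pa.
  - by exists (wgt (mirror N a) z); exact: weights_exist (mirror_popuc pa) (sz_mirror pa sz).
  - move=> wt owt s; exact (product_formula pa sz owt ow s).
move=> b bt z w wt c pb pbt szb szbt ow owt c0 rel n nN.
have pm := mirror_popuc pb; have szm := sz_mirror pb szb.
have om := weights_exist pm szm.
have pf s := product_formula pb szb om ow s.
have h0 := hN_gt0 pb.
have wtE : forall s, wt s = (c / hnorm b N) * wgt (mirror N b) z s.
  move=> s.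
  have ws : w s != 0 by rewrite gt_eqF // (proj1 ow).
  have wgp : 0 < wgt (mirror N b) z s * w s by rewrite mulr_gt0 // ?(proj1 om) ?(proj1 ow).
  have pn : `|((Phi b N.+1)^`()).[z s]| ^+ 2 != 0.
    by apply/eqP => e; move: wgp; rewrite pf e invr0 mulr0 ltxx.
  have e1 : wt s = c / `|((Phi b N.+1)^`()).[z s]| ^+ 2 / w s by rewrite -rel mulfK.
  have e2 : wgt (mirror N b) z s = hnorm b N / `|((Phi b N.+1)^`()).[z s]| ^+ 2 / w s
    by rewrite -pf mulfK.
  rewrite e1 e2; field.
  rewrite ws (gt_eqF h0) andbT /=.
  by apply: contra pn => /eqP ->; rewrite expr0n.
have ch : c = hnorm b N.
  have S1 := proj1 (proj2 owt); have S2 := proj1 (proj2 om).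
  have : 1 = c / hnorm b N.
    rewrite -S1 -[c / _]mulr1 -S2 mulr_sumr; apply: eq_bigr => s _; exact: wtE.
  by move=> E; have := congr1 (fun x => x * hnorm b N) E; rewrite /= mul1r divfK ?gt_eqF.
have om' : orth_weights N (mirror N b) z wt.
  by apply: (@orth_weights_ext _ _ _ _ (wgt (mirror N b) z) wt _ om) => s; rewrite wtE ch divff ?gt_eqF // mul1r.
exact: (same_params szbt szm owt om' nN).
Qed.
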